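(* Let $E$ be a finite-dimensional real affine space and let $G(E)$ be the set of generalized affine functions on $E$, equipped with the topology of pointwise convergence. Then $G(E)$ is a first countable topological space.
   Context: A generalized affine function on $E$ is a function $E\to\overline{\mathbb{R}}=\mathbb{R}\cup\{\pm\infty\}$ that is both convex and concave (extended-real-valued sense). The topology of pointwise convergence is the subspace topology from the product topology on $\overline{\mathbb{R}}^{E}$, with $\overline{\mathbb{R}}$ carrying its usual order topology. *)

(* Defs.v *)
From HB Require Import structures.
From mathcomp Require Import all_boot all_order all_algebra.
From mathcomp Require Import all_classical all_reals all_analysis.
Set Implicit Arguments. Unset Strict Implicit. Unset Printing Implicit Defensive.
Import Order.TTheory GRing.Theory Num.Theory.
Local Open Scope classical_set_scope.
Local Open Scope ring_scope.

(* Convexity of an extended-real-valued function (epigraph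
   {(x, mu) in E x R | f x <= mu} is convex). *)
Definition ext_convex (R : realType) (n : nat) (f : 'rV[R]_n -> \bar R) : Prop :=
  forall (x y : 'rV[R]_n) (a b t : R), 0 <= t <= 1 ->
    (f x <= a%:E)%E -> (f y <= b%:E)%E ->
    (f ((1 - t) *: x + t *: y)%R <= ((1 - t) * a + t * b)%:E)%E.

(* Concavity (hypograph {(x, mu) | mu <= f x} is convex). *)
Definition ext_concave (R : realType) (n : nat) (f : 'rV[R]_n -> \bar R) : Prop :=
  forall (x y : 'rV[R]_n) (a b t : R), 0 <= t <= 1 ->
    (a%:E <= f x)%E -> (b%:E <= f y)%E ->
    (((1 - t) * a + t * b)%:E <= f ((1 - t) *: x + t *: y)%R)%E.

Definition gen_affine (R : realType) (n : nat) : set {ptws 'rV[R]_n -> \bar R} :=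
  [set f | ext_convex f /\ ext_concave f].

Definition GA (R : realType) (n : nat) : topologicalType :=
  set_type (@gen_affine R n).

Definition first_countable (T : topologicalType) : Prop :=
  forall x : T, exists B : nat -> set T,
    (forall k, nbhs x (B k)) /\ (forall U, nbhs x U -> exists k, B k `<=` U).

(* Main.v *)
Require Import Defs.
From mathcomp Require Import all_boot all_order all_algebra.
From mathcomp Require Import all_classical all_reals all_analysis.
From mathcomp Require Import ring lra.
Set Implicit Arguments. Unset Strict Implicit. Unset Printing Implicit Defensive.
Import Order.TTheory GRing.Theory Num.Theory.
Local Open Scope classical_set_scope.
Local Open Scope ring_scope.
Import numFieldNormedType.Exports.
Definition cvx (R : realType) (n : nat) (S : set 'rV[R]_n) :=
  forall x y (t : R), 0 <= t <= 1 -> S x -> S y -> S ((1 - t) *: x + t *: y).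

Definition inconv (R : realType) (n : nat) (D : set 'rV[R]_n) (x : 'rV[R]_n) :=
  exists s : seq (R * 'rV[R]_n),
    (forall p, p \in s -> 0 <= p.1 /\ D p.2) /\
    \sum_(p <- s) p.1 = 1 /\ x = \sum_(p <- s) p.1 *: p.2.

Lemma wsum0 (R : realType) (n : nat) (s : seq (R * 'rV[R]_n)) :
  (forall p, p \in s -> 0 <= p.1) -> \sum_(p <- s) p.1 = 0 ->
  \sum_(p <- s) p.1 *: p.2 = 0.
Proof.
elim: s => [|[l p] s IH] Hs; first by move=> _; rewrite big_nil.
have Hs' : forall q, q \in s -> 0 <= q.1.
  by move=> q qs; apply: Hs; rewrite in_cons qs orbT.
have l0 : 0 <= l by exact: (Hs (l, p) (mem_head _ _)).
have s0 : 0 <= \sum_(q <- s) q.1 by rewrite big_seq; apply: sumr_ge0 => q; exact: Hs'.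
rewrite !big_cons /= => /eqP; rewrite paddr_eq0 //; move=> /andP[/eqP l00 /eqP Ts].
rewrite l00 (IH Hs' Ts).
by rewrite scale0r add0r.
Qed.

Lemma cvx_wsum (R : realType) (n : nat) (S : set 'rV[R]_n) : cvx S ->
  forall s : seq (R * 'rV[R]_n), (forall p, p \in s -> 0 <= p.1 /\ S p.2) ->
  0 < \sum_(p <- s) p.1 ->
  S ((\sum_(p <- s) p.1)^-1 *: \sum_(p <- s) p.1 *: p.2).
Proof.
move=> cS; elim => [|[l p] s IH] Hs; first by rewrite big_nil ltxx.
have Hs' : forall q, q \in s -> 0 <= q.1 /\ S q.2.
  by move=> q qs; apply: Hs; rewrite in_cons qs orbT.
have [l0 Sp] : 0 <= l /\ S p by exact: (Hs (l, p) (mem_head _ _)).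
have s0 : 0 <= \sum_(q <- s) q.1.
  by rewrite big_seq; apply: sumr_ge0 => q /Hs' [].
rewrite !big_cons /=.
set T := \sum_(q <- s) q.1; set W := \sum_(q <- s) q.1 *: q.2.
move=> lT.
have [T0|Tpos] := eqVneq T 0.
  have -> : W = 0 by apply: wsum0 => // q /Hs' [].
  rewrite T0 addr0 addr0 scalerA mulVf ?scale1r //.
  by move: lT; rewrite T0 addr0 lt0r => /andP[].
have Tp : 0 < T by rewrite lt0r Tpos s0.
have Sy := IH Hs' Tp.
have -> : W = T *: (T^-1 *: W) by rewrite scalerA divff ?scale1r.
set y := T^-1 *: W in Sy *.
have lT0 : l + T != 0 by rewrite gt_eqF.
suff -> : (l + T)^-1 *: (l *: p + T *: y) = (1 - T / (l + T)) *: p + (T / (l + T)) *: y.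
  apply: cS => //; apply/andP; split; first by rewrite divr_ge0 // ltW.
  by rewrite ler_pdivrMr // mul1r lerDr.
by apply/rowP => k; rewrite !mxE; field; rewrite Tpos lT0.
Qed.

Lemma cvx_inconv (R : realType) (n : nat) (S : set 'rV[R]_n) x :
  cvx S -> inconv S x -> S x.
Proof.
move=> cS [s [Hs [H1 ->]]].
have := cvx_wsum cS Hs; rewrite H1 invr1 scale1r; apply; exact: ltr01.
Qed.

Lemma inconv_cvx (R : realType) (n : nat) (D : set 'rV[R]_n) : cvx (inconv D).
Proof.
move=> x y t /andP[t0 t1] [s1 [H1 [W1 ->]]] [s2 [H2 [W2 ->]]].
exists ([seq ((1 - t) * q.1, q.2) | q <- s1] ++ [seq (t * q.1, q.2) | q <- s2]).
split; [|split].
- move=> p; rewrite mem_cat => /orP[] /mapP[q qs ->] /=.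
    by have [? ?] := H1 q qs; split => //; rewrite mulr_ge0 // subr_ge0.
  by have [? ?] := H2 q qs; split => //; rewrite mulr_ge0.
- by rewrite big_cat !big_map /= -!mulr_sumr W1 W2 !mulr1 subrK.
- by rewrite big_cat !big_map /= !scaler_sumr; congr (_ + _); apply: eq_bigr => q _; rewrite scalerA.
Qed.

Lemma inconv_mono (R : realType) (n : nat) (D D' : set 'rV[R]_n) :
  D `<=` D' -> inconv D `<=` inconv D'.
Proof.
move=> DD x [s [Hs H]]; exists s; split => // p /Hs [? ?]; split => //; exact: DD.
Qed.

Lemma inconv1 (R : realType) (n : nat) (D : set 'rV[R]_n) x : D x -> inconv D x.
Proof.
move=> Dx; exists [:: (1, x)]; split; [|split].
- by move=> p; rewrite inE => /eqP -> /=; split.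
- by rewrite big_seq1.
- by rewrite big_seq1 scale1r.
Qed.

Lemma inconv_idem (R : realType) (n : nat) (D : set 'rV[R]_n) x :
  inconv (inconv D) x -> inconv D x.
Proof. move=> H; apply: cvx_inconv H; exact: inconv_cvx. Qed.

Definition flatF (R : realType) (n : nat) (J : {set 'I_n}) (c : 'I_n -> R) : set 'rV[R]_n :=
  fun x => forall i, i \notin J -> x 0 i = c i.

Lemma cvx_flatF (R : realType) (n : nat) J c : cvx (@flatF R n J c).
Proof.
move=> x y t _ Fx Fy i iJ; rewrite !mxE (Fx i iJ) (Fy i iJ); ring.
Qed.

Lemma cvxI (R : realType) (n : nat) (A B : set 'rV[R]_n) : cvx A -> cvx B -> cvx (A `&` B).
Proof. by move=> cA cB x y t Ht [Ax Bx] [Ay By]; split; [apply: cA|apply: cB]. Qed.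

Lemma ext_unique (R : realType) (n : nat) J c (C : set 'rV[R]_n) :
  C `<=` flatF J c -> cvx C -> cvx (flatF J c `&` ~` C) ->
  forall x y, C x -> C y ->
  (forall v, C (x + v) -> C (x - v) -> v = 0) ->
  (forall v, C (y + v) -> C (y - v) -> v = 0) -> x = y.
Proof.
move=> CF cC cFC x y Cx Cy Ex Ey.
case: (eqVneq x y) => // xy; exfalso.
pose v := 2^-1 *: (y - x).
have h2 : 0 <= (2:R)^-1 <= 1.
  by apply/andP; split; [rewrite invr_ge0 ler0n | rewrite invf_le1 ?ler1n // ltr0n].
have Cm : C (x + v).
  have -> : x + v = (1 - 2^-1) *: x + 2^-1 *: y by apply/rowP => k; rewrite !mxE; field.
  exact: cC.
have v0 : v != 0.
  by rewrite scaler_eq0 invr_eq0 pnatr_eq0 /= subr_eq0 eq_sym xy.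
have nCx : ~ C (x - v) by move=> H; move/eqP: v0; apply; exact: Ex.
have nCy : ~ C (y + v).
  move=> H; move/eqP: v0; apply; apply/eqP; rewrite -oppr_eq0; apply/eqP; apply: Ey.
    by have -> : y + - v = x + v by apply/rowP => k; rewrite !mxE; field.
  by rewrite opprK.
have F1 : flatF J c (x - v).
  by move=> i iJ; rewrite !mxE (CF x Cx i iJ) (CF y Cy i iJ); ring.
have F2 : flatF J c (y + v).
  by move=> i iJ; rewrite !mxE (CF x Cx i iJ) (CF y Cy i iJ); ring.
have h4 : 0 <= (4:R)^-1 <= 1.
  by apply/andP; split; [rewrite invr_ge0 ler0n | rewrite invf_le1 ?ler1n // ltr0n].
have := cFC _ _ _ h4 (conj F1 nCx) (conj F2 nCy).
have -> : (1 - 4^-1) *: (x - v) + 4^-1 *: (y + v) = x.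
  by apply/rowP => k; rewrite !mxE; field.
by case.
Qed.

Lemma hemi_core (R : realType) (n : nat) J c (C : set 'rV[R]_n) :
  C `<=` flatF J c -> cvx C -> cvx (flatF J c `&` ~` C) ->
  (forall j (q : rat), j \in J -> exists e : nat -> 'rV[R]_n,
     forall x, C x -> x 0 j = ratr q -> inconv (range e `&` C) x) ->
  exists e : nat -> 'rV[R]_n, forall x, C x -> inconv (range e `&` C) x.
Proof.
move=> CF cC cFC Hs.
have Hs' : forall jq : 'I_n * rat, exists e : nat -> 'rV[R]_n, jq.1 \in J ->
    forall x, C x -> x 0 jq.1 = ratr jq.2 -> inconv (range e `&` C) x.
  move=> [j q]; case: (boolP (j \in J)) => jJ /=.
    by have [e He] := Hs j q jJ; exists e.
  by exists (fun _ => 0).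
case: (choice Hs') => E HE.
pose Ext := fun x => C x /\ forall v, C (x + v) -> C (x - v) -> v = 0.
pose x0 := xget 0 Ext.
pose e k := match unpickle k : option (option ('I_n * rat * nat)) with
  | Some (Some (j, q, m)) => E (j, q) m | _ => x0 end.
exists e => x Cx.
have rE : forall j q, range (E (j, q)) `<=` range e.
  by move=> j q _ [m _ <-]; exists (pickle (Some (j, q, m))) => //; rewrite /e pickleK.
have Hsub : forall j q, inconv (range (E (j, q)) `&` C) `<=` inconv (range e `&` C).
  by move=> j q; apply: inconv_mono => z [zr Cz]; split => //; exact: (rE j q z zr).
have [Ex|NEx] := pselect (Ext x).
  have Ex0 : Ext x0 by apply: xgetPex; exists x.
  have -> : x = x0 by exact: (ext_unique CF cC cFC Cx Ex0.1 Ex.2 Ex0.2).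
  apply: inconv1; split; last exact: Ex0.1.
  by exists (pickle (@None ('I_n * rat * nat))) => //; rewrite /e pickleK.
have [v [Cxv [Cxmv v0]]] : exists v, C (x + v) /\ C (x - v) /\ v != 0.
  have [//|H] := pselect (exists v, C (x + v) /\ C (x - v) /\ v != 0).
  exfalso; apply: NEx; split => // v Cp Cm; case: (eqVneq v 0) => // vn.
  by exfalso; apply: H; exists v.
have [i vi] : exists i, v 0 i != 0.
  have [//|H] := pselect (exists i, v 0 i != 0).
  exfalso; move/eqP: v0; apply; apply/rowP => i; rewrite mxE.
  by case: (eqVneq (v 0 i) 0) => // vi0; exfalso; apply: H; exists i.
have iJ : i \in J.
  apply: contraT => iJ; have h1 := CF _ Cxv i iJ; have h2 := CF _ Cx i iJ.
  rewrite mxE h2 in h1; have vz : v 0 i = 0 by lra.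
  by move: vi; rewrite vz eqxx.
have key : forall w, C (x + w) -> C (x - w) -> 0 < w 0 i -> inconv (range e `&` C) x.
  move=> w Cxw Cxmw wi.
  have Cz : forall lam, -1 <= lam <= 1 -> C (x + lam *: w).
    move=> lam /andP[l1 l2].
    have -> : x + lam *: w = (1 - (1 + lam)/2) *: (x - w) + ((1 + lam)/2) *: (x + w).
      by apply/rowP => k; rewrite !mxE; field.
    by apply: cC => //; apply/andP; split; lra.
  have [q1] : exists q, ratr q \in `](x 0 i - w 0 i), (x 0 i)[ by apply: rat_in_itvoo; lra.
  rewrite in_itv /= => /andP[a1 b1].
  have [q2] : exists q, ratr q \in `](x 0 i), (x 0 i + w 0 i)[ by apply: rat_in_itvoo; lra.
  rewrite in_itv /= => /andP[a2 b2].
  pose l1 := (ratr q1 - x 0 i) / w 0 i.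
  pose l2 := (ratr q2 - x 0 i) / w 0 i.
  have wi0 : w 0 i != 0 by rewrite lt0r_neq0.
  have L1 : -1 <= l1 <= 1.
    by apply/andP; split; [rewrite /l1 ler_pdivlMr //; lra | rewrite /l1 ler_pdivrMr //; lra].
  have L2 : -1 <= l2 <= 1.
    by apply/andP; split; [rewrite /l2 ler_pdivlMr //; lra | rewrite /l2 ler_pdivrMr //; lra].
  have l1n : l1 < 0 by rewrite /l1 ltr_pdivrMr // mul0r; lra.
  have l2p : 0 < l2 by rewrite /l2 ltr_pdivlMr // mul0r; lra.
  have z1 : inconv (range e `&` C) (x + l1 *: w).
    apply: (Hsub i q1); apply: (HE (i, q1)) => //; first exact: Cz.
    by rewrite /= !mxE /l1; field.
  have z2 : inconv (range e `&` C) (x + l2 *: w).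
    apply: (Hsub i q2); apply: (HE (i, q2)) => //; first exact: Cz.
    by rewrite /= !mxE /l2; field.
  pose t := (- l1) / (l2 - l1).
  have d0 : 0 < l2 - l1 by lra.
  have Ht : 0 <= t <= 1.
    apply/andP; split; first by rewrite /t divr_ge0 //; lra.
    by rewrite /t ler_pdivrMr // mul1r; lra.
  have := inconv_cvx Ht z1 z2.
  suff -> : (1 - t) *: (x + l1 *: w) + t *: (x + l2 *: w) = x by [].
  apply/rowP => k; rewrite !mxE /t; field; exact: lt0r_neq0.
case: (ltrgtP (v 0 i) 0) => vi0; last by move/eqP: vi; rewrite vi0.
  by apply: (key (- v)); [|rewrite opprK|rewrite mxE oppr_gt0].
exact: (key v Cxv Cxmv vi0).
Qed.

Lemma hemi_ind (R : realType) (n : nat) (k : nat) :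
  forall (J : {set 'I_n}) (c : 'I_n -> R) (C : set 'rV[R]_n), (#|J| <= k)%N -> C `<=` flatF J c -> cvx C ->
  cvx (flatF J c `&` ~` C) ->
  exists e : nat -> 'rV[R]_n, forall x, C x -> inconv (range e `&` C) x.
Proof.
elim: k => [|k IH] J c C HJ CF cC cFC; apply: (hemi_core CF cC cFC) => j q jJ.
  by move: HJ; rewrite leqn0 => /eqP/cards0_eq JE; move: jJ; rewrite JE inE.
pose c' := fun i => if i == j then ratr q else c i.
pose C' := C `&` (fun x : 'rV[R]_n => x 0 j = ratr q).
have FF : flatF (J :\ j) c' `<=` flatF J c.
  move=> x Fx i iJ; have ij : i != j by apply: contraNneq iJ => ->.
  by rewrite Fx ?in_setD1 ?(negbTE iJ) ?andbF // /c' (negbTE ij).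
have Fj : forall x, flatF (J :\ j) c' x -> x 0 j = ratr q.
  by move=> x Fx; rewrite Fx ?in_setD1 ?eqxx // /c' eqxx.
have h1 : (#|J :\ j| <= k)%N by move: HJ; rewrite (cardsD1 j J) jJ.
have h2 : C' `<=` flatF (J :\ j) c'.
  move=> x [Cx xj] i; rewrite in_setD1 negb_and negbK => /orP[/eqP ->|iJ].
    by rewrite /c' eqxx.
  rewrite /c'; case: eqP => [->//|_]; exact: CF.
have h3 : cvx C'.
  by apply: cvxI => // x y t _ hx hy; rewrite !mxE hx hy; ring.
have h4 : cvx (flatF (J :\ j) c' `&` ~` C').
  move=> x y t Ht [Fx nCx] [Fy nCy]; split; first exact: cvx_flatF.
  move=> [Cz _].
  have nCx' : ~ C x by move=> Cx; apply: nCx; split => //; exact: Fj.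
  have nCy' : ~ C y by move=> Cy; apply: nCy; split => //; exact: Fj.
  by have [] := cFC x y t Ht (conj (FF x Fx) nCx') (conj (FF y Fy) nCy').
have [e He] := IH (J :\ j) c' C' h1 h2 h3 h4.
exists e => x Cx xj; apply: inconv_mono (He x (conj Cx xj)).
by move=> z [? []]; split.
Qed.

Lemma hemi (R : realType) (n : nat) (C : set 'rV[R]_n) :
  cvx C -> cvx (~` C) ->
  exists e : nat -> 'rV[R]_n, forall x, C x -> inconv (range e `&` C) x.
Proof.
move=> cC cnC.
apply: (@hemi_ind R n _ [set: 'I_n] (fun _ => 0) C (leqnn _)) => //.
- by move=> x _ i; rewrite inE.
- by move=> x y t Ht [_ nx] [_ ny]; split; [move=> i; rewrite inE|exact: cnC].
Qed.

Lemma cvx_eq (R : realType) (n : nat) (A B : set 'rV[R]_n) :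
  (forall x, A x <-> B x) -> cvx A -> cvx B.
Proof. by move=> AB cA x y t Ht /AB Ax /AB Ay; apply/AB; exact: cA. Qed.

Lemma ereal_below (R : realType) (u : \bar R) (a : R) :
  (u < a%:E)%E -> exists b : R, (u <= b%:E)%E /\ b < a.
Proof.
case: u => [r| |] /=.
- by rewrite lte_fin => ra; exists r; split.
- by [].
- by move=> _; exists (a - 1); split; [exact: leNye | lra].
Qed.

Lemma ereal_above (R : realType) (u : \bar R) (a : R) :
  (a%:E < u)%E -> exists b : R, (b%:E <= u)%E /\ a < b.
Proof.
case: u => [r| |] /=.
- by rewrite lte_fin => ra; exists r; split.
- by move=> _; exists (a + 1); split; [exact: leey | lra].
- by [].
Qed.

Lemma cvx_lt (R : realType) (n : nat) (f : 'rV[R]_n -> \bar R) (a : R) :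
  ext_convex f -> cvx [set x | (f x < a%:E)%E].
Proof.
move=> cf x y t Ht fx fy /=.
have [b1 [h1 l1]] := ereal_below fx; have [b2 [h2 l2]] := ereal_below fy.
pose b := Num.max b1 b2.
have hb1 : (b1%:E <= b%:E)%E by rewrite lee_fin le_max lexx.
have hb2 : (b2%:E <= b%:E)%E by rewrite lee_fin le_max lexx orbT.
have := cf x y b b t Ht (le_trans h1 hb1) (le_trans h2 hb2).
have -> : (1 - t) * b + t * b = b by ring.
move=> h; apply: (le_lt_trans h); rewrite lte_fin gt_max l1 l2 //.
Qed.

Lemma cvx_gt (R : realType) (n : nat) (f : 'rV[R]_n -> \bar R) (a : R) :
  ext_concave f -> cvx [set x | (a%:E < f x)%E].
Proof.
move=> cf x y t Ht fx fy /=.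
have [b1 [h1 l1]] := ereal_above fx; have [b2 [h2 l2]] := ereal_above fy.
pose b := Num.min b1 b2.
have hb1 : (b%:E <= b1%:E)%E by rewrite lee_fin ge_min lexx.
have hb2 : (b%:E <= b2%:E)%E by rewrite lee_fin ge_min lexx orbT.
have := cf x y b b t Ht (le_trans hb1 h1) (le_trans hb2 h2).
have -> : (1 - t) * b + t * b = b by ring.
move=> h; apply: (lt_le_trans _ h); rewrite lte_fin lt_min l1 l2 //.
Qed.

Lemma cvx_le (R : realType) (n : nat) (f : 'rV[R]_n -> \bar R) (a : R) :
  ext_convex f -> cvx [set x | (f x <= a%:E)%E].
Proof.
move=> cf x y t Ht fx fy /=.
have := cf x y a a t Ht fx fy.
by have -> : (1 - t) * a + t * a = a by ring.
Qed.

Lemma cvx_ge (R : realType) (n : nat) (f : 'rV[R]_n -> \bar R) (a : R) :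
  ext_concave f -> cvx [set x | (a%:E <= f x)%E].
Proof.
move=> cf x y t Ht fx fy /=.
have := cf x y a a t Ht fx fy.
by have -> : (1 - t) * a + t * a = a by ring.
Qed.

Lemma gen_points (R : realType) (n : nat) (f : 'rV[R]_n -> \bar R) :
  ext_convex f -> ext_concave f ->
  exists e : nat -> 'rV[R]_n, forall (a : rat) x,
   (((ratr a)%:E < f x)%E -> inconv (range e `&` [set y | ((ratr a)%:E < f y)%E]) x) /\
   ((f x < (ratr a)%:E)%E -> inconv (range e `&` [set y | (f y < (ratr a)%:E)%E]) x).
Proof.
move=> cf cc.
pose S (ab : rat * bool) := if ab.2 then [set y | ((ratr ab.1)%:E < f y)%E]
  else [set y | (f y < (ratr ab.1)%:E)%E].
have H : forall ab, exists e : nat -> 'rV[R]_n, forall x, S ab x -> inconv (range e `&` S ab) x.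
  move=> [a []]; rewrite /S /=; apply: hemi.
  - exact: cvx_gt.
  - apply: (@cvx_eq R n [set x | (f x <= (ratr a)%:E)%E]); last exact: cvx_le.
    move=> x /=; split.
      by move=> h1 h2; move: h1; rewrite leNgt h2.
    by move/negP; rewrite -leNgt.
  - exact: cvx_lt.
  - apply: (@cvx_eq R n [set x | ((ratr a)%:E <= f x)%E]); last exact: cvx_ge.
    move=> x /=; split.
      by move=> h1 h2; move: h1; rewrite leNgt h2.
    by move/negP; rewrite -leNgt.
case: (choice H) => E HE.
pose e k := match unpickle k : option (rat * bool * nat) with
  | Some (a, b, m) => E (a, b) m | None => 0 end.
have rE : forall a b, range (E (a, b)) `<=` range e.
  by move=> a b _ [m _ <-]; exists (pickle (a, b, m)) => //; rewrite /e pickleK.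
exists e => a x; split => h.
  apply: inconv_mono (HE (a, true) x h) => z [zr Sz]; split => //; exact: (rE a true z zr).
apply: inconv_mono (HE (a, false) x h) => z [zr Sz]; split => //; exact: (rE a false z zr).
Qed.

Lemma inconv_idx (R : realType) (n : nat) (e : nat -> 'rV[R]_n) (P : set 'rV[R]_n) x :
  inconv (range e `&` P) x ->
  exists ks : seq nat, (forall k, k \in ks -> P (e k)) /\
    (forall S, cvx S -> (forall k, k \in ks -> S (e k)) -> S x).
Proof.
move=> [s [Hs [H1 Hx]]].
have [ks [Hk Hs2]] : exists ks : seq nat, (forall k, k \in ks -> P (e k)) /\
    (forall p, p \in s -> exists2 k, k \in ks & e k = p.2).
  elim: s {H1 Hx} Hs => [|p s IH] Hs.
    by exists [::]; split => // p; rewrite in_nil.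
  have Hs' : forall q, q \in s -> 0 <= q.1 /\ (range e `&` P) q.2.
    by move=> q qs; apply: Hs; rewrite in_cons qs orbT.
  have [ks [Hk Hks]] := IH Hs'.
  have [_ [[k _ ek] Pp]] := Hs p (mem_head _ _).
  exists (k :: ks); split.
    by move=> k'; rewrite in_cons => /orP[/eqP ->|]; [rewrite ek|exact: Hk].
  move=> q; rewrite in_cons => /orP[/eqP ->|qs]; first by exists k; rewrite ?mem_head.
  by have [k' k'ks ek'] := Hks q qs; exists k' => //; rewrite in_cons k'ks orbT.
exists ks; split => // S cS HS.
apply: (cvx_inconv cS); exists s; split => //.
move=> p ps; have [k kk ek] := Hs2 p ps; split; first exact: (Hs p ps).1.
by rewrite -ek; exact: HS.
Qed.

Lemma GA_nbhs_eval (R : realType) (n : nat) (f : GA R n) (p : 'rV[R]_n) (W : set (\bar R)) :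
  nbhs (sval f p) W -> nbhs f [set g : GA R n | W (sval g p)].
Proof.
move=> Wn.
have hc : continuous (fun g : GA R n => sval g p).
  move=> g; apply: (@continuous_comp (GA R n) {ptws 'rV[R]_n -> \bar R} _ sval (fun h => h p)).
    exact: initial_continuous.
  exact: proj_continuous.
exact: (hc f W Wn).
Qed.

Lemma GA_nbhs_inv (R : realType) (n : nat) (f : GA R n) U : nbhs f U ->
  exists V : set {ptws 'rV[R]_n -> \bar R}, nbhs (sval f : {ptws 'rV[R]_n -> \bar R}) V /\
    forall g : GA R n, V (sval g) -> U g.
Proof.
rewrite nbhsE => -[B [[A oA AB] Bf] BU].
exists A; split.
  by apply: open_nbhs_nbhs; split => //; move: Bf; rewrite -AB.
by move=> g Ag; apply: BU; rewrite -AB.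
Qed.
Lemma ptws_from (R : realType) (n : nat) (F : set_system {ptws 'rV[R]_n -> \bar R}) h :
  Filter F -> (forall t W, nbhs (h t) W -> F [set g | W (g t)]) ->
  forall V, nbhs (h : {ptws 'rV[R]_n -> \bar R}) V -> F V.
Proof.
move=> FF H.
have : {ptws, F --> h}.
  apply/pointwise_cvgP => t W /= Wn; exact: H.
by move=> cv V /cv.
Qed.

Theorem theorem3 (R : realType) (n : nat) : first_countable (GA R n).
Proof.
move=> f.
have gaP : forall g : GA R n, ext_convex (sval g) /\ ext_concave (sval g).
  by move=> g; have := set_mem (svalP g).
have [cf cc] := gaP f.
have [e He] := gen_points cf cc.
pose cond (g : GA R n) (t : nat * rat * bool) : Prop :=
  if t.2 then ((ratr t.1.2)%:E < sval g (e t.1.1))%E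
  else (sval g (e t.1.1) < (ratr t.1.2)%:E)%E.
pose Bs (s : seq (nat * rat * bool)) : set (GA R n) :=
  [set g | forall t, t \in s -> cond f t -> cond g t].
exists (fun k => if unpickle k is Some s then Bs s else setT).
have Ht : forall t, nbhs f [set g : GA R n | cond f t -> cond g t].
  move=> [[k a] b]; have [cft|ncft] := pselect (cond f (k, a, b)).
    case: b cft => /= cft.
      apply: filterS (GA_nbhs_eval (open_ereal_gt' cft)) => g h _; exact: h.
    apply: filterS (GA_nbhs_eval (open_ereal_lt' cft)) => g h _; exact: h.
  by apply: filterS filterT => g _ /ncft.
have Bsn : forall s, nbhs f (Bs s).
  elim => [|t s IH].
    by apply: filterS filterT => g _ t; rewrite in_nil.
  apply: filterS (filterI IH (Ht t)) => g [Hg1 Hg2] t'.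
  by rewrite in_cons => /orP[/eqP ->|]; [exact: Hg2|exact: Hg1].
split.
  by move=> k; case: unpickle => [s|]; [exact: Bsn|exact: filterT].
move=> U /GA_nbhs_inv [V [Vn VU]].
pose Fb := filter_from [set: seq (nat * rat * bool)] Bs.
have FbF : Filter Fb.
  apply: filter_from_filter; first by exists [::].
  move=> s1 s2 _ _; exists (s1 ++ s2) => // g Hg; split => t ts; apply: Hg;
    by rewrite mem_cat ts ?orbT.
have lower : forall (t : 'rV[R]_n) (a : rat), ((ratr a)%:E < sval f t)%E ->
    Fb [set g | ((ratr a)%:E < sval g t)%E].
  move=> t a ha; have [ks [Hk Hx]] := inconv_idx ((He a t).1 ha).
  exists [seq (k, a, true) | k <- ks] => // g Hg /=.
  apply: (Hx [set y | ((ratr a)%:E < sval g y)%E]); first exact: cvx_gt (gaP g).2.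
  move=> k kks; apply: (Hg (k, a, true)); last exact: Hk.
  by apply/mapP; exists k.
have upper : forall (t : 'rV[R]_n) (a : rat), (sval f t < (ratr a)%:E)%E ->
    Fb [set g | (sval g t < (ratr a)%:E)%E].
  move=> t a ha; have [ks [Hk Hx]] := inconv_idx ((He a t).2 ha).
  exists [seq (k, a, false) | k <- ks] => // g Hg /=.
  apply: (Hx [set y | (sval g y < (ratr a)%:E)%E]); first exact: cvx_lt (gaP g).1.
  move=> k kks; apply: (Hg (k, a, false)); last exact: Hk.
  by apply/mapP; exists k.
have key : forall t W, nbhs (sval f t) W -> (sval @ Fb) [set g | W (g t)].
  move=> t W; rewrite /fmap /=.
  case Hft: (sval f t) => [r| |] Wn.
  - move: Wn; rewrite /nbhs /= => /nbhs_ballP [eps /= eps0 HB].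
    have [q1] : exists q, ratr q \in `](r - eps), r[ by apply: rat_in_itvoo; lra.
    rewrite in_itv /= => /andP[a1 b1].
    have [q2] : exists q, ratr q \in `]r, (r + eps)[ by apply: rat_in_itvoo; lra.
    rewrite in_itv /= => /andP[a2 b2].
    have l1 : ((ratr q1)%:E < sval f t)%E by rewrite Hft lte_fin.
    have l2 : (sval f t < (ratr q2)%:E)%E by rewrite Hft lte_fin.
    apply: filterS (filterI (lower t q1 l1) (upper t q2 l2)) => g [] /=.
    case: (sval g t) => [s| |] g1 g2.
    + rewrite !lte_fin in g1 g2; apply: HB; rewrite -ball_normE /ball_ /=.
      rewrite ltr_distlC; apply/andP; split; lra.
    + by rewrite ltNge leey in g2.
    + by rewrite ltNge leNye in g1.
  - case: Wn => M [_ HM].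
    have [q] : exists q, ratr q \in `]M, (M + 1)[ by apply: rat_in_itvoo; lra.
    rewrite in_itv /= => /andP[a1 _].
    have l1 : ((ratr q)%:E < sval f t)%E by rewrite Hft ltry.
    apply: filterS (lower t q l1) => g /= g1; apply: HM.
    by apply: lt_trans g1; rewrite lte_fin.
  - case: Wn => M [_ HM].
    have [q] : exists q, ratr q \in `](M - 1), M[ by apply: rat_in_itvoo; lra.
    rewrite in_itv /= => /andP[_ a1].
    have l1 : (sval f t < (ratr q)%:E)%E by rewrite Hft ltNyr.
    apply: filterS (upper t q l1) => g /= g1; apply: HM.
    by apply: lt_trans g1 _; rewrite lte_fin.
have := @ptws_from R n (sval @ Fb) (sval f) _ key V Vn.
move=> [s _ Hs]; exists (pickle s); rewrite pickleK => g /Hs; exact: VU.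
Qed.
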